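(* There exists a $2$-isometry $T\in B(\ell^2)$ such that for every $\lambda\in(0,1)$ and every $m\ge2$, the $\lambda$-Aluthge transform $\Delta_\lambda(T)$ is not an $m$-isometry. (For instance, the weighted shift with weights $a_j=\sqrt{(j+1)/j}$, $j\ge1$.)
   Context: $\ell^2$ has canonical basis $(e_j)_{j\ge1}$; the weighted shift associated to a bounded complex sequence $(a_j)_{j\ge1}$ is the operator $T\in B(\ell^2)$ with $Te_j=a_je_{j+1}$. For $T\in B(H)$ with polar decomposition $T=V|T|$ ($|T|=(T^*T)^{1/2}$, $V$ the partial isometry with $\ker V=\ker T$) and $\lambda\in[0,1]$, the $\lambda$-Aluthge transform is $\Delta_\lambda(T)=|T|^\lambda V|T|^{1-\lambda}$. For $m\ge1$, $T$ is an $m$-isometry if $\sum_{k=0}^m(-1)^k\binom{m}{k}\|T^kx\|^2=0$ for all $x\in H$. *)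

(* Defs.v *)
From Stdlib Require Import Reals List.
From Coquelicot Require Import Coquelicot.
Open Scope R_scope.

(** Sequences of complex numbers; l^2 is the subset of square-summable ones.
    Index j : nat starts at 0 (the paper's e_1 is our index 0). *)
Definition seqC := nat -> C.

Definition zeroS : seqC := fun _ => 0%C.
Definition addS (x y : seqC) : seqC := fun n => (x n + y n)%C.
Definition scaleS (a : C) (x : seqC) : seqC := fun n => (a * x n)%C.
Definition subS (x y : seqC) : seqC := fun n => (x n - y n)%C.

Definition in_l2 (x : seqC) : Prop := ex_series (fun n => (Cmod (x n)) ^ 2).

Definition l2norm (x : seqC) : R := sqrt (Series (fun n => (Cmod (x n)) ^ 2)).

(** inner product <x,y> = sum_n x_n * conj(y_n) (real and imaginary parts
    summed separately; both series converge absolutely on l^2). *)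
Definition inner (x y : seqC) : C :=
  (Series (fun n => Re (x n * Cconj (y n))%C),
   Series (fun n => Im (x n * Cconj (y n))%C)).

(** Operators are maps on sequences; only their values on l^2 matter. *)
Definition op := seqC -> seqC.

Definition op_linear (T : op) : Prop :=
  forall x y a, in_l2 x -> in_l2 y -> T (addS x (scaleS a y)) = addS (T x) (scaleS a (T y)).

Definition bounded_op (T : op) : Prop :=
  op_linear T /\ (forall x, in_l2 x -> in_l2 (T x)) /\
  exists M, forall x, in_l2 x -> l2norm (T x) <= M * l2norm x.

Definition is_adjoint (T Ts : op) : Prop :=
  bounded_op Ts /\
  forall x y, in_l2 x -> in_l2 y -> inner (T x) y = inner x (Ts y).

Definition positive_op (S : op) : Prop :=
  forall x, in_l2 x -> Im (inner (S x) x) = 0 /\ 0 <= Re (inner (S x) x).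

Definition is_modulus (T S : op) : Prop :=
  bounded_op S /\ positive_op S /\
  exists Ts, is_adjoint T Ts /\ forall x, in_l2 x -> S (S x) = Ts (T x).

Definition partial_isometry (V : op) : Prop :=
  bounded_op V /\
  forall x, in_l2 x ->
    (forall y, in_l2 y -> V y = zeroS -> inner x y = 0%C) ->
    l2norm (V x) = l2norm x.

Definition is_polar_isometry (T S V : op) : Prop :=
  partial_isometry V /\
  (forall x, in_l2 x -> (V x = zeroS <-> T x = zeroS)) /\
  (forall x, in_l2 x -> T x = V (S x)).

(** real power t^lam on [0,oo) (with 0^lam = 0, lam > 0). *)
Definition rpow (t lam : R) : R := if Rlt_dec 0 t then Rpower t lam else 0.

Fixpoint peval (cs : list R) (t : R) : R :=
  match cs with nil => 0 | c :: cs' => c + t * peval cs' t end.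

Fixpoint op_poly (cs : list R) (S : op) (x : seqC) : seqC :=
  match cs with
  | nil => zeroS
  | c :: cs' => addS (scaleS (RtoC c) x) (S (op_poly cs' S x))
  end.

(** P = S^lam, via continuous functional calculus: whenever polynomials p_n
    converge uniformly to t^lam on [0,M] (M a bound for S, hence containing
    the spectrum of the positive operator S), p_n(S) -> P strongly. *)
Definition is_frac_pow (S : op) (lam : R) (P : op) : Prop :=
  bounded_op P /\
  forall M, 0 <= M -> (forall x, in_l2 x -> l2norm (S x) <= M * l2norm x) ->
  forall ps : nat -> list R,
    (forall eps, 0 < eps -> exists N, forall n, (N <= n)%nat ->
       forall t, 0 <= t <= M -> Rabs (peval (ps n) t - rpow t lam) <= eps) ->
    forall x, in_l2 x -> is_lim_seq (fun n => l2norm (subS (op_poly (ps n) S x) (P x))) 0.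

Definition is_aluthge (lam : R) (T D : op) : Prop :=
  exists S V P Q,
    is_modulus T S /\ is_polar_isometry T S V /\
    is_frac_pow S lam P /\ is_frac_pow S (1 - lam) Q /\
    forall x, in_l2 x -> D x = P (V (Q x)).

Definition m_isometry (m : nat) (T : op) : Prop :=
  bounded_op T /\
  forall x, in_l2 x ->
    sum_f_R0 (fun k => (-1) ^ k * Binomial.C m k * (l2norm (Nat.iter k T x)) ^ 2) m = 0.

(* Main.v *)
Require Import Defs.
From Stdlib Require Import Reals.
From Coquelicot Require Import Coquelicot.
From Stdlib Require Import Reals Lra Lia Psatz List ZArith FunctionalExtensionality.
From Stdlib Require Import IndefiniteDescription.
From Coquelicot Require Import Coquelicot.
Open Scope R_scope.

Fixpoint padd (p q : list R) : list R :=
  match p, q with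
  | nil, _ => q
  | _, nil => p
  | a :: p', b :: q' => (a + b) :: padd p' q'
  end.
Lemma padd_ok p q t : peval (padd p q) t = peval p t + peval q t.
Proof. revert q; induction p as [|a p IH]; intros [|b q]; simpl; try ring.
rewrite IH; ring. Qed.
Definition pscal (c : R) (p : list R) := map (fun a => c * a) p.
Lemma pscal_ok c p t : peval (pscal c p) t = c * peval p t.
Proof. induction p as [|a p IH]; simpl; try ring. rewrite IH; ring. Qed.
Fixpoint pmul (p q : list R) : list R :=
  match p with nil => nil | a :: p' => padd (pscal a q) (0 :: pmul p' q) end.
Lemma pmul_ok p q t : peval (pmul p q) t = peval p t * peval q t.
Proof. induction p as [|a p IH]; simpl; try ring.
rewrite padd_ok, pscal_ok; simpl; rewrite IH; ring. Qed.

Definition ispoly (f : R -> R) := exists cs, forall t, peval cs t = f t.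
Lemma ispoly_const c : ispoly (fun _ => c).
Proof. exists (c :: nil); intro; simpl; ring. Qed.
Lemma ispoly_lin a b : ispoly (fun t => a + b * t).
Proof. exists (a :: b :: nil); intro; simpl; ring. Qed.
Lemma ispoly_add f g : ispoly f -> ispoly g -> ispoly (fun t => f t + g t).
Proof. intros [p Hp] [q Hq]; exists (padd p q); intro; rewrite padd_ok, Hp, Hq; auto. Qed.
Lemma ispoly_mul f g : ispoly f -> ispoly g -> ispoly (fun t => f t * g t).
Proof. intros [p Hp] [q Hq]; exists (pmul p q); intro; rewrite pmul_ok, Hp, Hq; auto. Qed.
Lemma ispoly_ext f g : ispoly f -> (forall t, f t = g t) -> ispoly g.
Proof. intros [p Hp] H; exists p; intro; rewrite Hp; auto. Qed.
Lemma ispoly_sum (F : nat -> R -> R) n :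
  (forall k, ispoly (F k)) -> ispoly (fun t => sum_f_R0 (fun k => F k t) n).
Proof. intro H; induction n; simpl; auto. apply ispoly_add; auto. Qed.

Fixpoint bb (n k : nat) (x : R) : R :=
  match n with
  | O => match k with O => 1 | _ => 0 end
  | S n' => match k with
            | O => (1 - x) * bb n' O x
            | S k' => (1 - x) * bb n' (S k') x + x * bb n' k' x
            end
  end.

Lemma bb_nonneg n k x : 0 <= x <= 1 -> 0 <= bb n k x.
Proof. intro Hx; revert k; induction n; intros [|k]; simpl; try lra.
- apply Rmult_le_pos; [lra|auto].
- apply Rplus_le_le_0_compat; apply Rmult_le_pos; try lra; auto.
Qed.

Lemma bb_zero n k x : (n < k)%nat -> bb n k x = 0.
Proof. revert k; induction n; intros [|k] Hk; simpl; try lia; auto.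
rewrite IHn by lia; rewrite IHn by lia; ring. Qed.

Lemma bb_poly n k M : ispoly (fun t => bb n k (t * / M)).
Proof. revert k; induction n; intros [|k]; simpl.
- apply ispoly_const. - apply ispoly_const.
- apply ispoly_mul; auto. apply (ispoly_lin 1 (- / M)) || idtac.
  eapply ispoly_ext; [apply (ispoly_lin 1 (- / M))|]; intro; simpl; ring.
- apply ispoly_add; apply ispoly_mul; auto.
  eapply ispoly_ext; [apply (ispoly_lin 1 (- / M))|]; intro; simpl; ring.
  eapply ispoly_ext; [apply (ispoly_lin 0 (/ M))|]; intro; simpl; ring.
Qed.

Lemma sum_lin (f g : nat -> R) a b n :
  sum_f_R0 (fun k => a * f k + b * g k) n = a * sum_f_R0 f n + b * sum_f_R0 g n.
Proof. induction n; simpl; [ring|rewrite IHn; ring]. Qed.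

Lemma bb_shift (g : nat -> R) n x :
  sum_f_R0 (fun k => g k * bb (S n) k x) (S n) =
  (1 - x) * sum_f_R0 (fun k => g k * bb n k x) n
  + x * sum_f_R0 (fun k => g (S k) * bb n k x) n.
Proof.
  rewrite decomp_sum by lia. simpl pred.
  assert (E : sum_f_R0 (fun k => g k * bb n k x) n =
              g O * bb n O x + sum_f_R0 (fun i => g (S i) * bb n (S i) x) n).
  { assert (E2 : sum_f_R0 (fun k => g k * bb n k x) (S n) = sum_f_R0 (fun k => g k * bb n k x) n).
    { rewrite tech5. rewrite (bb_zero n (S n)) by lia. ring. }
    rewrite <- E2. rewrite decomp_sum by lia. reflexivity. }
  rewrite E.
  replace (sum_f_R0 (fun i : nat => g (S i) * bb (S n) (S i) x) n) with
    (sum_f_R0 (fun i => (1 - x) * (g (S i) * bb n (S i) x) + x * (g (S i) * bb n i x)) n).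
  2:{ apply sum_eq; intros; simpl; ring. }
  rewrite sum_lin. simpl. ring.
Qed.

Lemma bb_M0 n x : sum_f_R0 (fun k => 1 * bb n k x) n = 1.
Proof. induction n; [simpl; ring|]. rewrite bb_shift, IHn; lra. Qed.

Lemma bb_M1 n x : sum_f_R0 (fun k => INR k * bb n k x) n = INR n * x.
Proof. induction n; [simpl; ring|]. rewrite bb_shift, IHn.
replace (sum_f_R0 (fun k => INR (S k) * bb n k x) n) with
  (sum_f_R0 (fun k => 1 * (INR k * bb n k x) + 1 * (1 * bb n k x)) n).
2:{ apply sum_eq; intros; rewrite S_INR; ring. }
rewrite sum_lin, IHn, bb_M0, S_INR; ring. Qed.

Lemma bb_M2 n x : sum_f_R0 (fun k => INR k ^ 2 * bb n k x) n = INR n * x * (1 - x) + INR n ^ 2 * x ^ 2.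
Proof. induction n; [simpl; ring|]. rewrite bb_shift, IHn.
replace (sum_f_R0 (fun k => INR (S k) ^ 2 * bb n k x) n) with
  (sum_f_R0 (fun k => 1 * (INR k ^ 2 * bb n k x) + 1 * (2 * (INR k * bb n k x) + 1 * (1 * bb n k x))) n).
2:{ apply sum_eq; intros; rewrite S_INR; ring. }
rewrite sum_lin, sum_lin, IHn, bb_M0, bb_M1, S_INR; ring. Qed.

Lemma bb_var n x : (0 < n)%nat ->
  sum_f_R0 (fun k => (INR k / INR n - x) ^ 2 * bb n k x) n = x * (1 - x) / INR n.
Proof. intro Hn. assert (Hn' : 0 < INR n) by (apply lt_0_INR; lia).
replace (sum_f_R0 (fun k => (INR k / INR n - x) ^ 2 * bb n k x) n) with
  (sum_f_R0 (fun k => (/ INR n ^ 2) * (INR k ^ 2 * bb n k x) + 1 * ((- 2 * x / INR n) * (INR k * bb n k x) + x ^ 2 * (1 * bb n k x))) n).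
2:{ apply sum_eq; intros; field; lra. }
rewrite sum_lin, sum_lin, bb_M0, bb_M1, bb_M2. field; lra. Qed.

Definition bern (f : R -> R) (n : nat) (x : R) :=
  sum_f_R0 (fun k => f (INR k / INR n) * bb n k x) n.

Lemma nat_big r : exists N : nat, r < INR N.
Proof. destruct (Rle_or_lt r 0) as [H|H].
- exists 1%nat; simpl; lra.
- destruct (archimed r) as [H1 _]. exists (Z.to_nat (up r)).
  rewrite INR_IZR_INZ, Z2Nat.id; auto.
  apply le_IZR. lra.
Qed.

Lemma bern_unif (f : R -> R) :
  (forall eps, 0 < eps -> exists C, forall u v, 0 <= u <= 1 -> 0 <= v <= 1 ->
      Rabs (f u - f v) <= eps + C * (u - v) ^ 2) ->
  forall eps, 0 < eps -> exists N, forall n, (N <= n)%nat -> forall x, 0 <= x <= 1 ->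
      Rabs (bern f n x - f x) <= eps.
Proof.
  intros Hf eps Heps.
  destruct (Hf (eps / 2)) as [C HC]; [lra|].
  destruct (nat_big (Rabs C * 2 / eps)) as [N HN].
  exists (S N). intros n Hn x Hx.
  assert (Hn0 : (0 < n)%nat) by lia.
  assert (HnR : 0 < INR n) by (apply lt_0_INR; lia).
  assert (HNn : INR N < INR n) by (apply lt_INR; lia).
  unfold bern.
  replace (f x) with (f x * sum_f_R0 (fun k => 1 * bb n k x) n) by (rewrite bb_M0; ring).
  rewrite scal_sum.
  rewrite <- minus_sum.
  eapply Rle_trans; [apply sum_f_R0_triangle|].
  eapply Rle_trans with (sum_f_R0 (fun k => (eps/2) * (1 * bb n k x) + Rabs C * ((INR k / INR n - x) ^ 2 * bb n k x)) n).
  { apply sum_Rle; intros k Hk; cbv beta.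
    assert (Hb := bb_nonneg n k x Hx).
    assert (Hk1 : 0 <= INR k / INR n <= 1).
    { split. apply Rmult_le_pos; [apply pos_INR|left; apply Rinv_0_lt_compat; auto].
      apply Rmult_le_reg_r with (INR n); auto. unfold Rdiv; rewrite Rmult_assoc, Rinv_l by lra.
      rewrite Rmult_1_r, Rmult_1_l; apply le_INR; auto. }
    specialize (HC _ _ Hk1 Hx).
    replace (f (INR k / INR n) * bb n k x - 1 * bb n k x * f x) with
      ((f (INR k / INR n) - f x) * bb n k x) by ring.
    rewrite Rabs_mult, (Rabs_right (bb n k x)) by lra.
    assert (C * (INR k / INR n - x) ^ 2 <= Rabs C * (INR k / INR n - x) ^ 2).
    { apply Rmult_le_compat_r; [apply pow2_ge_0|apply RRle_abs]. }
    assert (Rabs (f (INR k / INR n) - f x) * bb n k x <= (eps / 2 + Rabs C * (INR k / INR n - x) ^ 2) * bb n k x) by (apply Rmult_le_compat_r; lra).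
    nra. }
  rewrite sum_lin, bb_M0, bb_var by auto.
  assert (Rabs C * (x * (1 - x) / INR n) <= eps / 2).
  { assert (0 <= x * (1 - x) <= 1) by nra.
    assert (Rabs C * 2 / eps < INR n) by lra.
    assert (Rabs C < eps / 2 * INR n).
    { apply Rmult_lt_compat_r with (r := eps / 2) in H0; [|lra].
      replace (Rabs C * 2 / eps * (eps / 2)) with (Rabs C) in H0 by (field; lra). lra. }
    assert (0 <= Rabs C) by apply Rabs_pos.
    unfold Rdiv. apply Rmult_le_reg_r with (INR n); auto.
    replace (Rabs C * (x * (1 - x) * / INR n) * INR n) with (Rabs C * (x * (1 - x))) by (field; lra).
    nra. }
  lra.
Qed.

Lemma exp_le' x y : x <= y -> exp x <= exp y.
Proof. intros [H|H]; [left; apply exp_increasing; auto|subst; lra]. Qed.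

Lemma rpow_pos t p : 0 < t -> rpow t p = Rpower t p.
Proof. intro; unfold rpow; destruct (Rlt_dec 0 t); [auto|lra]. Qed.
Lemma rpow_nonpos t p : t <= 0 -> rpow t p = 0.
Proof. intro; unfold rpow; destruct (Rlt_dec 0 t); [lra|auto]. Qed.
Lemma Rpower_gt0 t p : 0 < Rpower t p.
Proof. unfold Rpower; apply exp_pos. Qed.
Lemma rpow_nonneg t p : 0 <= rpow t p.
Proof. unfold rpow; destruct (Rlt_dec 0 t); [left; apply Rpower_gt0|lra]. Qed.
Lemma rpow_mono a b p : 0 <= p -> 0 <= b <= a -> rpow b p <= rpow a p.
Proof. intros Hp [Hb Hba]. destruct Hb as [Hb|Hb].
- rewrite !rpow_pos by lra. apply Rle_Rpower_l; lra.
- subst; rewrite rpow_nonpos by lra; apply rpow_nonneg. Qed.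

Lemma Rpower_anti a c q : q <= 0 -> 0 < a <= c -> Rpower c q <= Rpower a q.
Proof. intros Hq [Ha Hac]; unfold Rpower; apply exp_le'.
assert (ln a <= ln c) by (apply ln_le; lra). nra. Qed.

Lemma rpow_subadd a b p : 0 < p <= 1 -> 0 <= a -> 0 <= b ->
  rpow (a + b) p <= rpow a p + rpow b p.
Proof. intros Hp Ha Hb.
destruct Ha as [Ha|Ha]; [|subst; rewrite Rplus_0_l, (rpow_nonpos 0) by lra; lra].
destruct Hb as [Hb|Hb]; [|subst; rewrite Rplus_0_r, (rpow_nonpos 0) by lra; lra].
rewrite !rpow_pos by lra.
assert (E : forall x, 0 < x -> Rpower x p = x * Rpower x (p - 1)).
{ intros x Hx. replace p with (1 + (p - 1)) at 1 by ring. rewrite Rpower_plus, Rpower_1; auto. }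
rewrite (E (a+b)), (E a), (E b) by lra.
assert (Rpower (a + b) (p - 1) <= Rpower a (p - 1)) by (apply Rpower_anti; lra).
assert (Rpower (a + b) (p - 1) <= Rpower b (p - 1)) by (apply Rpower_anti; lra).
nra. Qed.

Lemma rpow_holder a b p : 0 < p <= 1 -> 0 <= a -> 0 <= b ->
  Rabs (rpow a p - rpow b p) <= rpow (Rabs (a - b)) p.
Proof. intros Hp Ha Hb.
destruct (Rle_or_lt b a) as [H|H].
- rewrite (Rabs_right (a - b)) by lra.
  assert (rpow b p <= rpow a p) by (apply rpow_mono; lra).
  rewrite Rabs_right by lra.
  assert (Hs : rpow (b + (a - b)) p <= rpow b p + rpow (a - b) p) by (apply rpow_subadd; lra).
  replace (b + (a - b)) with a in Hs by ring. lra.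
- rewrite (Rabs_left (a - b)) by lra.
  assert (rpow a p <= rpow b p) by (apply rpow_mono; lra).
  rewrite Rabs_left1 by lra.
  assert (Hs : rpow (a + (b - a)) p <= rpow a p + rpow (b - a) p) by (apply rpow_subadd; lra).
  replace (a + (b - a)) with b in Hs by ring. replace (- (a - b)) with (b - a) by ring. lra.
Qed.

Lemma rpow_approx p M : 0 < p <= 1 -> 0 < M ->
  exists ps : nat -> list R, forall eps, 0 < eps -> exists N, forall n, (N <= n)%nat ->
    forall t, 0 <= t <= M -> Rabs (peval (ps n) t - rpow t p) <= eps.
Proof.
  intros Hp HM.
  set (f := fun u => rpow (M * u) p).
  assert (Hpoly : forall n, ispoly (fun t => bern f n (t * / M))).
  { intro n. unfold bern. apply ispoly_sum. intro k.
    apply ispoly_mul; [apply ispoly_const|apply bb_poly]. }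
  exists (fun n => proj1_sig (constructive_indefinite_description _ (Hpoly n))).
  intros eps Heps.
  destruct (bern_unif f) with (eps := eps) as [N HN]; auto.
  2:{ exists N. intros n Hn t Ht.
      destruct (constructive_indefinite_description _ (Hpoly n)) as [cs Hcs]; simpl.
      rewrite Hcs.
      assert (Ht' : 0 <= t * / M <= 1).
      { split. apply Rmult_le_pos; [lra|left; apply Rinv_0_lt_compat; lra].
        apply Rmult_le_reg_r with M; auto. rewrite Rmult_assoc, Rinv_l by lra; lra. }
      specialize (HN n Hn _ Ht'). unfold f at 2 in HN.
      replace (M * (t * / M)) with t in HN by (field; lra). auto. }
  clear eps Heps. intros eps Heps.
  set (d := Rpower eps (/ p)).
  assert (Hd : 0 < d) by apply Rpower_gt0.
  assert (Hdp : rpow d p = eps).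
  { rewrite rpow_pos by auto. unfold d. rewrite Rpower_mult.
    replace (/ p * p) with 1 by (field; lra). apply Rpower_1; auto. }
  set (K := rpow M p).
  exists (K * M ^ 2 / d ^ 2). intros u v Hu Hv.
  unfold f.
  eapply Rle_trans; [apply rpow_holder; auto; nra|].
  rewrite <- Rmult_minus_distr_l, Rabs_mult, (Rabs_right M) by lra.
  assert (HK : 0 <= K) by apply rpow_nonneg.
  assert (Hz : 0 <= M * Rabs (u - v) <= M).
  { split. apply Rmult_le_pos; [lra|apply Rabs_pos].
    assert (Rabs (u - v) <= 1) by (apply Rabs_le; lra). nra. }
  destruct (Rle_or_lt (M * Rabs (u - v)) d) as [Hs|Hs].
  - assert (rpow (M * Rabs (u - v)) p <= rpow d p) by (apply rpow_mono; lra).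
    assert (0 <= K * M ^ 2 / d ^ 2 * (u - v) ^ 2).
    { apply Rmult_le_pos; [|apply pow2_ge_0]. unfold Rdiv; apply Rmult_le_pos.
      apply Rmult_le_pos; auto; apply pow2_ge_0. left; apply Rinv_0_lt_compat; nra. }
    lra.
  - assert (rpow (M * Rabs (u - v)) p <= K) by (apply rpow_mono; lra).
    assert (Hq : 1 <= (M * Rabs (u - v)) ^ 2 / d ^ 2).
    { apply Rmult_le_reg_r with (d ^ 2); [nra|].
      unfold Rdiv; rewrite Rmult_assoc, Rinv_l by nra. nra. }
    replace (K * M ^ 2 / d ^ 2 * (u - v) ^ 2) with (K * ((M * Rabs (u - v)) ^ 2 / d ^ 2)).
    2:{ rewrite Rpow_mult_distr, pow2_abs. field. nra. }
    nra.
Qed.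

Lemma Cmod2 (z : C) : Cmod z ^ 2 = fst z ^ 2 + snd z ^ 2.
Proof. unfold Cmod. rewrite pow2_sqrt; [auto|nra]. Qed.

Lemma ex_series_nonneg_le (a b : nat -> R) :
  (forall n, 0 <= a n <= b n) -> ex_series b -> ex_series a.
Proof. intros H Hb. apply (ex_series_le a b); auto. intro n.
unfold norm; simpl; unfold abs; simpl. rewrite Rabs_pos_eq; apply H. Qed.

Lemma ex_series_extR (a b : nat -> R) : (forall n, a n = b n) -> ex_series a -> ex_series b.
Proof. apply (@ex_series_ext R_AbsRing R_NormedModule). Qed.

Lemma ex_series_lin (a b : nat -> R) c d :
  ex_series a -> ex_series b -> ex_series (fun n => c * a n + d * b n).
Proof. intros Ha Hb.
apply (ex_series_ext (fun n => plus (scal c (a n)) (scal d (b n)))); [reflexivity|].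
apply (@ex_series_plus R_AbsRing R_NormedModule); apply (@ex_series_scal_l R_AbsRing R_NormedModule); auto. Qed.

Lemma Series_lin (a b : nat -> R) c d :
  ex_series a -> ex_series b -> Series (fun n => c * a n + d * b n) = c * Series a + d * Series b.
Proof. intros Ha Hb. rewrite Series_plus.
rewrite !Series_scal_l; auto.
apply (ex_series_ext (fun n => scal c (a n))); [reflexivity|apply (@ex_series_scal_l R_AbsRing R_NormedModule); auto].
apply (ex_series_ext (fun n => scal d (b n))); [reflexivity|apply (@ex_series_scal_l R_AbsRing R_NormedModule); auto]. Qed.

Lemma is_series_evconst (a : nat -> R) (j : nat) (c : R) :
  (forall N, (j <= N)%nat -> sum_f_R0 a N = c) -> is_series a c.
Proof. intro H.
assert (is_lim_seq (sum_n a) c).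
{ apply is_lim_seq_ext_loc with (fun _ => c); [|apply is_lim_seq_const].
  exists j; intros n Hn; rewrite sum_n_Reals; symmetry; auto. }
exact H0. Qed.

Definition indf (j : nat) (c : R) : nat -> R := fun n => if Nat.eq_dec n j then c else 0.

Lemma sum_ind j c N : sum_f_R0 (indf j c) N = if le_dec j N then c else 0.
Proof. induction N; simpl.
- unfold indf; destruct (Nat.eq_dec 0 j), (le_dec j 0); try lia; auto; lra.
- rewrite IHN. unfold indf. destruct (Nat.eq_dec (S N) j), (le_dec j N), (le_dec j (S N)); try lia; lra. Qed.

Lemma is_series_ind j c : is_series (indf j c) c.
Proof. apply is_series_evconst with j. intros N HN; rewrite sum_ind.
destruct (le_dec j N); [auto|lia]. Qed.
Lemma Series_ind j c : Series (indf j c) = c.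
Proof. apply is_series_unique, is_series_ind. Qed.
Lemma ex_series_ind j c : ex_series (indf j c).
Proof. exists c; apply is_series_ind. Qed.
Lemma Series_zero : Series (fun _ => 0) = 0.
Proof. rewrite (Series_ext _ (indf 0 0)); [apply Series_ind|].
intro n; unfold indf; destruct (Nat.eq_dec n 0); auto. Qed.

Lemma Cmod_add2 (x y : C) : Cmod (x + y) ^ 2 <= 2 * Cmod x ^ 2 + 2 * Cmod y ^ 2.
Proof. rewrite !Cmod2. destruct x as [x1 x2], y as [y1 y2]; unfold Cplus; simpl.
assert (0 <= (x1 - y1)^2) by apply pow2_ge_0. assert (0 <= (x2 - y2)^2) by apply pow2_ge_0. nra. Qed.

Lemma l2_add x y : in_l2 x -> in_l2 y -> in_l2 (addS x y).
Proof. intros Hx Hy. unfold in_l2.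
apply ex_series_nonneg_le with (fun n => 2 * Cmod (x n) ^ 2 + 2 * Cmod (y n) ^ 2).
- intro n; split; [apply pow2_ge_0|apply Cmod_add2].
- apply ex_series_lin; auto. Qed.

Lemma l2_scale a x : in_l2 x -> in_l2 (scaleS a x).
Proof. intros Hx. unfold in_l2, scaleS.
apply (ex_series_extR (fun n => Cmod a ^ 2 * Cmod (x n) ^ 2 + 0 * Cmod (x n) ^ 2)).
- intro n; rewrite Cmod_mult; ring.
- apply ex_series_lin; auto. Qed.

Lemma l2_sub x y : in_l2 x -> in_l2 y -> in_l2 (subS x y).
Proof. intros Hx Hy.
replace (subS x y) with (addS x (scaleS (-1)%C y)).
- apply l2_add; auto; apply l2_scale; auto.
- unfold subS, addS, scaleS; apply functional_extensionality; intro n; ring. Qed.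

Lemma Series_nonneg (a : nat -> R) : (forall n, 0 <= a n) -> ex_series a -> 0 <= Series a.
Proof. intros H Ha. rewrite <- Series_zero. apply Series_le; auto. intro n; split; [lra|apply H]. Qed.

Lemma l2norm_sq x : in_l2 x -> l2norm x ^ 2 = Series (fun n => Cmod (x n) ^ 2).
Proof. intro Hx. unfold l2norm. rewrite pow2_sqrt; auto.
apply Series_nonneg; auto. intro; apply pow2_ge_0. Qed.

Lemma l2norm_nonneg x : 0 <= l2norm x.
Proof. apply sqrt_pos. Qed.

Lemma coord_le w i : in_l2 w -> Cmod (w i) <= l2norm w.
Proof. intro Hw.
assert (H : Cmod (w i) ^ 2 <= l2norm w ^ 2).
{ rewrite l2norm_sq by auto. rewrite <- (Series_ind i (Cmod (w i) ^ 2)).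
  apply Series_le; auto. intro n; unfold indf; destruct (Nat.eq_dec n i); subst; split; try lra; try apply pow2_ge_0. }
assert (0 <= Cmod (w i)) by apply Cmod_ge_0. assert (0 <= l2norm w) by apply l2norm_nonneg. nra. Qed.

Definition ev (j : nat) : seqC := fun i => if Nat.eq_dec i j then 1%C else 0%C.

Lemma scale_ev_sq c j : (fun n => Cmod (scaleS c (ev j) n) ^ 2) = indf j (Cmod c ^ 2).
Proof. apply functional_extensionality; intro n. unfold scaleS, ev, indf.
destruct (Nat.eq_dec n j). rewrite Cmult_1_r; auto. rewrite Cmult_0_r, Cmod_0; ring. Qed.

Lemma l2_scale_ev c j : in_l2 (scaleS c (ev j)).
Proof. unfold in_l2; rewrite scale_ev_sq; apply ex_series_ind. Qed.
Lemma l2norm_scale_ev c j : l2norm (scaleS c (ev j)) = Cmod c.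
Proof. unfold l2norm; rewrite scale_ev_sq, Series_ind. apply sqrt_pow2, Cmod_ge_0. Qed.
Lemma ev_scale1 j : ev j = scaleS 1%C (ev j).
Proof. apply functional_extensionality; intro n; unfold scaleS; ring. Qed.
Lemma l2_ev j : in_l2 (ev j).
Proof. rewrite ev_scale1; apply l2_scale_ev. Qed.
Lemma l2norm_ev j : l2norm (ev j) = 1.
Proof. rewrite ev_scale1, l2norm_scale_ev, Cmod_1; auto. Qed.

Lemma lin_zero T : op_linear T -> T zeroS = zeroS.
Proof. intro H. assert (Hz : in_l2 zeroS).
{ replace zeroS with (scaleS 0%C (ev 0)) by (apply functional_extensionality; intro; unfold scaleS, zeroS; ring).
  apply l2_scale_ev. }
specialize (H zeroS zeroS (-1)%C Hz Hz).
replace (addS zeroS (scaleS (-1)%C zeroS)) with zeroS in H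
  by (apply functional_extensionality; intro; unfold addS, scaleS, zeroS; ring).
apply functional_extensionality; intro n.
assert (E := f_equal (fun f => f n) H). simpl in E. unfold addS, scaleS in E.
unfold zeroS. rewrite E at 1. ring. Qed.

Lemma lin_scale T c x : op_linear T -> in_l2 x -> T (scaleS c x) = scaleS c (T x).
Proof. intros H Hx.
assert (Hz : in_l2 zeroS).
{ replace zeroS with (scaleS 0%C (ev 0)) by (apply functional_extensionality; intro; unfold scaleS, zeroS; ring).
  apply l2_scale_ev. }
assert (E := H zeroS x c Hz Hx). rewrite lin_zero in E by auto.
replace (addS zeroS (scaleS c x)) with (scaleS c x) in E
  by (apply functional_extensionality; intro; unfold addS, scaleS, zeroS; ring).
rewrite E. apply functional_extensionality; intro; unfold addS, scaleS, zeroS; ring. Qed.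

Definition diag (d : nat -> R) : op := fun x n => (RtoC (d n) * x n)%C.
Definition sh : op := fun x n => match n with O => 0%C | S m => x m end.
Definition bsh : op := fun x n => x (S n).

Lemma Cmod_RtoC_mult r z : Cmod (RtoC r * z) ^ 2 = r ^ 2 * Cmod z ^ 2.
Proof. rewrite Cmod_mult, Rpow_mult_distr, Cmod_R, pow2_abs; auto. Qed.

Lemma diag_bound d K x : (forall n, Rabs (d n) <= K) -> in_l2 x ->
  in_l2 (diag d x) /\ Series (fun n => Cmod (diag d x n) ^ 2) <= K ^ 2 * Series (fun n => Cmod (x n) ^ 2).
Proof. intros Hd Hx.
assert (Hle : forall n, 0 <= Cmod (diag d x n) ^ 2 <= K ^ 2 * Cmod (x n) ^ 2).
{ intro n; unfold diag; rewrite Cmod_RtoC_mult. split. apply Rmult_le_pos; apply pow2_ge_0.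
  apply Rmult_le_compat_r; [apply pow2_ge_0|]. rewrite <- pow2_abs.
  assert (0 <= Rabs (d n)) by apply Rabs_pos. specialize (Hd n). nra. }
assert (Hex : ex_series (fun n => K ^ 2 * Cmod (x n) ^ 2)).
{ apply (ex_series_extR (fun n => K ^ 2 * Cmod (x n) ^ 2 + 0 * Cmod (x n) ^ 2)); [intro; ring|].
  apply ex_series_lin; auto. }
split. - apply ex_series_nonneg_le with (fun n => K ^ 2 * Cmod (x n) ^ 2); auto.
- rewrite <- Series_scal_l. apply Series_le; auto. Qed.

Lemma sqrt_le_K K S1 S2 : 0 <= K -> 0 <= S2 -> S1 <= K ^ 2 * S2 -> sqrt S1 <= K * sqrt S2.
Proof. intros HK HS H. rewrite <- (sqrt_pow2 K) by auto. rewrite <- sqrt_mult by nra.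
apply sqrt_le_1_alt; auto. Qed.

Lemma diag_norm d K x : 0 <= K -> (forall n, Rabs (d n) <= K) -> in_l2 x ->
  l2norm (diag d x) <= K * l2norm x.
Proof. intros HK Hd Hx. destruct (diag_bound d K x Hd Hx) as [_ H].
unfold l2norm. apply sqrt_le_K; auto. apply Series_nonneg; auto; intro; apply pow2_ge_0. Qed.

Lemma diag_linear d : op_linear (diag d).
Proof. intros x y a _ _. apply functional_extensionality; intro n; unfold diag, addS, scaleS; ring. Qed.

Lemma bounded_diag d K : (forall n, Rabs (d n) <= K) -> bounded_op (diag d).
Proof. intro Hd. assert (HK : 0 <= K) by (eapply Rle_trans; [apply Rabs_pos|apply (Hd 0%nat)]).
split; [apply diag_linear|split].
- intros x Hx; apply (diag_bound d K x Hd Hx).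
- exists K; intros; apply diag_norm; auto. Qed.

Lemma sh_sq x : (fun n => Cmod (sh x n) ^ 2) 0%nat = 0.
Proof. simpl. rewrite Cmod_0; ring. Qed.

Lemma sh_l2 x : in_l2 x -> in_l2 (sh x).
Proof. intro Hx. unfold in_l2. apply (ex_series_incr_1 (fun n => Cmod (sh x n) ^ 2)). exact Hx. Qed.

Lemma sh_series x : Series (fun n => Cmod (sh x n) ^ 2) = Series (fun n => Cmod (x n) ^ 2).
Proof. rewrite Series_incr_1_aux; [reflexivity|apply sh_sq]. Qed.

Lemma sh_norm x : l2norm (sh x) = l2norm x.
Proof. unfold l2norm; rewrite sh_series; auto. Qed.

Lemma sh_linear : op_linear sh.
Proof. intros x y a _ _. apply functional_extensionality; intros [|n]; unfold sh, addS, scaleS; simpl; auto; ring. Qed.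

Lemma bounded_sh : bounded_op sh.
Proof. split; [apply sh_linear|split]. apply sh_l2. exists 1; intros; rewrite sh_norm; lra. Qed.

Lemma bsh_l2 x : in_l2 x -> in_l2 (bsh x) /\ Series (fun n => Cmod (bsh x n) ^ 2) <= Series (fun n => Cmod (x n) ^ 2).
Proof. intro Hx. unfold in_l2 in Hx.
assert (H1 : ex_series (fun n => Cmod (bsh x n) ^ 2)).
{ apply (ex_series_incr_1 (fun n => Cmod (x n) ^ 2)) in Hx. exact Hx. }
split; auto. rewrite (Series_incr_1 (fun n => Cmod (x n) ^ 2)) by auto.
unfold bsh. assert (0 <= Cmod (x 0%nat) ^ 2) by apply pow2_ge_0. lra. Qed.

Lemma bounded_bsh : bounded_op bsh.
Proof. split; [|split].
- intros x y a _ _. apply functional_extensionality; intros n; unfold bsh, addS, scaleS; auto.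
- intros x Hx; apply (bsh_l2 x Hx).
- exists 1; intros x Hx. rewrite Rmult_1_l. unfold l2norm. apply sqrt_le_1_alt. apply (bsh_l2 x Hx). Qed.

Lemma bounded_comp A B : bounded_op A -> bounded_op B -> bounded_op (fun x => A (B x)).
Proof. intros [LA [IA [MA HA]]] [LB [IB [MB HB]]].
split; [|split].
- intros x y a Hx Hy. rewrite LB by auto. rewrite LA; auto.
- intros; auto.
- exists (Rabs MA * Rabs MB). intros x Hx.
  assert (H1 := HA (B x) (IB x Hx)). assert (H2 := HB x Hx).
  assert (0 <= l2norm (B x)) by apply l2norm_nonneg. assert (0 <= l2norm x) by apply l2norm_nonneg.
  assert (MA * l2norm (B x) <= Rabs MA * l2norm (B x)) by (apply Rmult_le_compat_r; auto; apply RRle_abs).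
  assert (MB * l2norm x <= Rabs MB * l2norm x) by (apply Rmult_le_compat_r; auto; apply RRle_abs).
  assert (0 <= Rabs MA) by apply Rabs_pos.
  assert (Rabs MA * l2norm (B x) <= Rabs MA * (Rabs MB * l2norm x)) by (apply Rmult_le_compat_l; lra).
  lra. Qed.

Lemma ex_series_leR (a b : nat -> R) : (forall n, Rabs (a n) <= b n) -> ex_series b -> ex_series a.
Proof. intros H Hb. apply (@ex_series_le R_AbsRing R_CompleteNormedModule a b); auto. Qed.
Lemma ex_inner_re x y : in_l2 x -> in_l2 y -> ex_series (fun n => Re (x n * Cconj (y n))%C).
Proof. intros Hx Hy. apply (ex_series_leR _ (fun n => / 2 * Cmod (x n) ^ 2 + / 2 * Cmod (y n) ^ 2)).
- intro n. rewrite !Cmod2.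
  destruct (x n) as [x1 x2], (y n) as [y1 y2]. unfold Re, Cconj, Cmult; simpl.
  assert (0 <= (x1 - y1)^2) by apply pow2_ge_0. assert (0 <= (x2 - y2)^2) by apply pow2_ge_0.
  assert (0 <= (x1 + y1)^2) by apply pow2_ge_0. assert (0 <= (x2 + y2)^2) by apply pow2_ge_0.
  assert (0 <= (x1 - y2)^2) by apply pow2_ge_0. assert (0 <= (x2 - y1)^2) by apply pow2_ge_0.
  assert (0 <= (x1 + y2)^2) by apply pow2_ge_0. assert (0 <= (x2 + y1)^2) by apply pow2_ge_0.
  apply Rabs_le. split; nra.
- apply ex_series_lin; auto. Qed.
Lemma ex_inner_im x y : in_l2 x -> in_l2 y -> ex_series (fun n => Im (x n * Cconj (y n))%C).
Proof. intros Hx Hy. apply (ex_series_leR _ (fun n => / 2 * Cmod (x n) ^ 2 + / 2 * Cmod (y n) ^ 2)).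
- intro n. rewrite !Cmod2.
  destruct (x n) as [x1 x2], (y n) as [y1 y2]. unfold Im, Cconj, Cmult; simpl.
  assert (0 <= (x1 - y1)^2) by apply pow2_ge_0. assert (0 <= (x2 - y2)^2) by apply pow2_ge_0.
  assert (0 <= (x1 + y1)^2) by apply pow2_ge_0. assert (0 <= (x2 + y2)^2) by apply pow2_ge_0.
  assert (0 <= (x1 - y2)^2) by apply pow2_ge_0. assert (0 <= (x2 - y1)^2) by apply pow2_ge_0.
  assert (0 <= (x1 + y2)^2) by apply pow2_ge_0. assert (0 <= (x2 + y1)^2) by apply pow2_ge_0.
  apply Rabs_le. split; nra.
- apply ex_series_lin; auto. Qed.

Lemma inner_ev_l c k y : inner (scaleS c (ev k)) y = (c * Cconj (y k))%C.
Proof. unfold inner.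
rewrite (Series_ext _ (indf k (Re (c * Cconj (y k))))).
rewrite (Series_ext (fun n => Im _) (indf k (Im (c * Cconj (y k))))).
- rewrite !Series_ind. destruct (c * Cconj (y k))%C; auto.
- intro n; unfold indf, scaleS, ev; destruct (Nat.eq_dec n k); subst.
  rewrite Cmult_1_r; auto. rewrite Cmult_0_r, Cmult_0_l; auto.
- intro n; unfold indf, scaleS, ev; destruct (Nat.eq_dec n k); subst.
  rewrite Cmult_1_r; auto. rewrite Cmult_0_r, Cmult_0_l; auto.
Qed.

Lemma inner_ev_r x k : inner x (ev k) = x k.
Proof. unfold inner.
rewrite (Series_ext _ (indf k (Re (x k)))).
rewrite (Series_ext (fun n => Im _) (indf k (Im (x k)))).
- rewrite !Series_ind. destruct (x k); auto.
- intro n; unfold indf, ev; destruct (Nat.eq_dec n k); subst.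
  rewrite Cconj_1 || idtac. unfold Cconj, Im, Cmult; simpl; ring.
  unfold Cconj, Im, Cmult; simpl; ring.
- intro n; unfold indf, ev; destruct (Nat.eq_dec n k); subst.
  unfold Cconj, Re, Cmult; simpl; ring.
  unfold Cconj, Re, Cmult; simpl; ring.
Qed.

Definition aw (n : nat) : R := sqrt (INR (n + 2) / INR (n + 1)).

Lemma aw_sq n : aw n ^ 2 = INR (n + 2) / INR (n + 1).
Proof. unfold aw. rewrite pow2_sqrt; auto.
apply Rlt_le, Rdiv_lt_0_compat; apply lt_0_INR; lia. Qed.
Lemma aw_sq' n : aw n ^ 2 = (INR n + 2) / (INR n + 1).
Proof. rewrite aw_sq, !plus_INR; simpl; f_equal; f_equal; ring. Qed.
Lemma aw_pos n : 0 < aw n.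
Proof. unfold aw; apply sqrt_lt_R0, Rdiv_lt_0_compat; apply lt_0_INR; lia. Qed.
Lemma aw_ge1 n : 1 <= aw n.
Proof. assert (H := aw_sq' n). assert (H0 := aw_pos n). assert (0 <= INR n) by apply pos_INR.
assert (1 <= aw n ^ 2). { rewrite H. apply Rmult_le_reg_r with (INR n + 1); [lra|].
unfold Rdiv; rewrite Rmult_assoc, Rinv_l by lra; lra. }
nra. Qed.
Lemma aw_le2 n : aw n <= 2.
Proof. assert (H := aw_sq' n). assert (H0 := aw_pos n). assert (0 <= INR n) by apply pos_INR.
assert (aw n ^ 2 <= 2). { rewrite H. apply Rmult_le_reg_r with (INR n + 1); [lra|].
unfold Rdiv; rewrite Rmult_assoc, Rinv_l by lra; lra. }
nra. Qed.
Lemma aw_abs n : Rabs (aw n) <= 2.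
Proof. rewrite Rabs_pos_eq by (left; apply aw_pos); apply aw_le2. Qed.

Definition Top : op := fun x => sh (diag aw x).
Definition Tadj : op := fun y => diag aw (bsh y).

Lemma bounded_T : bounded_op Top.
Proof. apply (bounded_comp sh (diag aw)); [apply bounded_sh|apply (bounded_diag aw 2 aw_abs)]. Qed.

Lemma T_l2 x : in_l2 x -> in_l2 (Top x).
Proof. apply bounded_T. Qed.

Lemma T_series x : in_l2 x ->
  Series (fun n => Cmod (Top x n) ^ 2) = Series (fun n => aw n ^ 2 * Cmod (x n) ^ 2).
Proof. intro. unfold Top. rewrite sh_series. apply Series_ext; intro n.
unfold diag; apply Cmod_RtoC_mult. Qed.

Lemma ex_w x (w : nat -> R) K : in_l2 x -> (forall n, Rabs (w n) <= K) ->
  ex_series (fun n => w n ^ 2 * Cmod (x n) ^ 2).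
Proof. intros Hx Hw. destruct (diag_bound w K x Hw Hx) as [H _].
apply (ex_series_extR _ _ (fun n => Cmod_RtoC_mult (w n) (x n))); exact H. Qed.

Lemma binom20 : Binomial.C 2 0 = 1. Proof. apply C_n_0. Qed.
Lemma binom22 : Binomial.C 2 2 = 1. Proof. apply C_n_n. Qed.
Lemma binom21 : Binomial.C 2 1 = 2.
Proof. unfold Binomial.C; simpl. field. Qed.

Lemma T_2iso : m_isometry 2 Top.
Proof. split; [apply bounded_T|]. intros x Hx.
assert (Hx1 := T_l2 x Hx). assert (Hx2 := T_l2 _ Hx1).
assert (N0 := l2norm_sq x Hx). assert (N1 := l2norm_sq _ Hx1). assert (N2 := l2norm_sq _ Hx2).
rewrite T_series in N1, N2 by auto.
transitivity (l2norm x ^ 2 - 2 * l2norm (Top x) ^ 2 + l2norm (Top (Top x)) ^ 2).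
{ simpl sum_f_R0. rewrite binom20, binom21, binom22. simpl Nat.iter. ring. }
rewrite N0, N1, N2.
rewrite (Series_ext (fun n => aw n ^ 2 * Cmod (Top x n) ^ 2) (fun n => aw n ^ 2 * Cmod (sh (diag aw x) n) ^ 2)) by reflexivity.
rewrite (Series_incr_1_aux (fun n => aw n ^ 2 * Cmod (sh (diag aw x) n) ^ 2)) by (cbv beta iota delta [sh]; rewrite Cmod_0; ring).
simpl sh.
rewrite (Series_ext (fun n => aw (S n) ^ 2 * Cmod (diag aw x n) ^ 2)
   (fun n => (aw (S n) * aw n) ^ 2 * Cmod (x n) ^ 2)).
2:{ intro n; unfold diag; rewrite Cmod_RtoC_mult; ring. }
assert (E : forall n, Cmod (x n) ^ 2 - 2 * (aw n ^ 2 * Cmod (x n) ^ 2) + (aw (S n) * aw n) ^ 2 * Cmod (x n) ^ 2 = 0).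
{ intro n. rewrite Rpow_mult_distr, !aw_sq'. rewrite S_INR.
  assert (0 <= INR n) by apply pos_INR. field. lra. }
assert (Ea : ex_series (fun n => aw n ^ 2 * Cmod (x n) ^ 2)) by (apply ex_w with 2; auto; apply aw_abs).
assert (Eb : ex_series (fun n => (aw (S n) * aw n) ^ 2 * Cmod (x n) ^ 2)).
{ apply ex_w with 4; auto. intro n. rewrite Rabs_mult.
  assert (0 <= Rabs (aw (S n))) by apply Rabs_pos. assert (0 <= Rabs (aw n)) by apply Rabs_pos.
  assert (H1 := aw_abs n). assert (H2 := aw_abs (S n)). nra. }
rewrite <- (Series_ext _ _ E) in Series_zero || idtac.
assert (Z := Series_zero). rewrite <- (Series_ext _ _ E) in Z.
rewrite (Series_ext _ (fun n => 1 * (1 * Cmod (x n) ^ 2 + (-2) * (aw n ^ 2 * Cmod (x n) ^ 2)) + 1 * ((aw (S n) * aw n) ^ 2 * Cmod (x n) ^ 2))) in Z by (intro; ring).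
rewrite Series_lin, Series_lin in Z; auto.
2:{ apply ex_series_lin; auto. }
lra.
Qed.

Lemma S_positive : positive_op (diag aw).
Proof. intros x Hx. unfold inner.
rewrite (Series_ext (fun n => Im _) (fun _ => 0)).
2:{ intro n. unfold diag. destruct (x n) as [x1 x2]. unfold Im, Cconj, Cmult, RtoC; simpl. ring. }
rewrite Series_zero. split; auto.
apply Series_nonneg.
- intro n. unfold diag. destruct (x n) as [x1 x2]. unfold Re, Cconj, Cmult, RtoC; simpl.
  assert (H := aw_pos n). nra.
- apply ex_inner_re; auto. apply (bounded_diag aw 2 aw_abs). auto.
Qed.

Lemma bounded_Tadj : bounded_op Tadj.
Proof. apply (bounded_comp (diag aw) bsh); [apply (bounded_diag aw 2 aw_abs)|apply bounded_bsh]. Qed.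

Lemma T_adj : is_adjoint Top Tadj.
Proof. split; [apply bounded_Tadj|]. intros x y Hx Hy. unfold inner. f_equal.
- rewrite Series_incr_1_aux.
  2:{ unfold Top, sh. cbv beta iota. destruct (y 0%nat) as [y1 y2]. unfold Re, Im, Cconj, Cmult; simpl. ring. }
  apply Series_ext; intro n. unfold Top, Tadj, sh, diag, bsh.
  destruct (x n) as [x1 x2], (y (S n)) as [y1 y2]. unfold Re, Cconj, Cmult, RtoC; simpl. ring.
- rewrite Series_incr_1_aux.
  2:{ unfold Top, sh. cbv beta iota. destruct (y 0%nat) as [y1 y2]. unfold Re, Im, Cconj, Cmult; simpl. ring. }
  apply Series_ext; intro n. unfold Top, Tadj, sh, diag, bsh.
  destruct (x n) as [x1 x2], (y (S n)) as [y1 y2]. unfold Im, Cconj, Cmult, RtoC; simpl. ring.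
Qed.

Lemma T_mod : is_modulus Top (diag aw).
Proof. split; [apply (bounded_diag aw 2 aw_abs)|split; [apply S_positive|]].
exists Tadj; split; [apply T_adj|]. intros x _. reflexivity. Qed.

Lemma RtoC_mult_cancel r z : r <> 0 -> (RtoC r * z)%C = 0%C -> z = 0%C.
Proof. intros Hr H. replace z with (RtoC (/ r) * (RtoC r * z))%C.
rewrite H; ring. rewrite Cmult_assoc, <- RtoC_mult, Rinv_l by auto. ring. Qed.

Lemma T_polar : is_polar_isometry Top (diag aw) sh.
Proof. split; [|split].
- split; [apply bounded_sh|]. intros; apply sh_norm.
- intros x Hx; split; intro H.
  + apply functional_extensionality; intros [|n]; [reflexivity|].
    assert (Hn := f_equal (fun f => f (S n)) H). unfold Top, sh, diag, zeroS in *. simpl in Hn.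
    rewrite Hn; ring.
  + apply functional_extensionality; intros [|n]; [reflexivity|].
    assert (Hn := f_equal (fun f => f (S n)) H). unfold Top, sh, diag, zeroS in *. simpl in Hn.
    apply RtoC_mult_cancel with (aw n); auto; apply Rgt_not_eq, aw_pos.
- intros; reflexivity.
Qed.

Definition Pw (lam : R) : op := diag (fun n => rpow (aw n) lam).

Lemma rpow_aw_bound lam n : 0 <= lam <= 1 -> Rabs (rpow (aw n) lam) <= 2.
Proof. intro Hl. rewrite Rabs_pos_eq by apply rpow_nonneg. rewrite rpow_pos by apply aw_pos.
eapply Rle_trans; [|apply (aw_le2 n)]. rewrite <- (Rpower_1 (aw n)) at 2 by apply aw_pos.
apply Rle_Rpower; [apply aw_ge1|lra]. Qed.

Lemma op_poly_diag cs d x : op_poly cs (diag d) x = diag (fun n => peval cs (d n)) x.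
Proof. induction cs as [|c cs IH]; simpl.
- apply functional_extensionality; intro n; unfold zeroS, diag; simpl. ring.
- rewrite IH. apply functional_extensionality; intro n; unfold addS, scaleS, diag.
  rewrite RtoC_plus, RtoC_mult. ring. Qed.

Lemma diag_sub d1 d2 x : subS (diag d1 x) (diag d2 x) = diag (fun n => d1 n - d2 n) x.
Proof. apply functional_extensionality; intro n; unfold subS, diag.
unfold Rminus. rewrite RtoC_plus, RtoC_opp. unfold Cminus. ring. Qed.

Lemma diag_ev d j : diag d (ev j) = scaleS (RtoC (d j)) (ev j).
Proof. apply functional_extensionality; intro n; unfold diag, scaleS, ev.
destruct (Nat.eq_dec n j); subst; auto. ring. Qed.

Lemma frac_Pw lam : 0 <= lam <= 1 -> is_frac_pow (diag aw) lam (Pw lam).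
Proof. intro Hl. split; [apply (bounded_diag _ 2 (fun n => rpow_aw_bound lam n Hl))|].
intros M HM0 HM ps Hps x Hx.
assert (HaM : forall n, aw n <= M).
{ intro n. specialize (HM (ev n) (l2_ev n)). rewrite l2norm_ev, diag_ev, l2norm_scale_ev, Cmod_R in HM.
  rewrite Rabs_pos_eq in HM by (left; apply aw_pos). lra. }
apply is_lim_seq_spec. intros [eps Heps]; simpl.
set (e' := eps / (2 * (l2norm x + 1))).
assert (He' : 0 < e'). { unfold e'. assert (0 <= l2norm x) by apply l2norm_nonneg.
  apply Rdiv_lt_0_compat; lra. }
destruct (Hps e' He') as [N HN]. exists N. intros n Hn.
rewrite Rminus_0_r, Rabs_pos_eq by apply l2norm_nonneg.
unfold Pw. rewrite op_poly_diag, diag_sub.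
eapply Rle_lt_trans.
{ apply (diag_norm _ e'); [lra| |auto]. intro k. apply HN; auto. split; [left; apply aw_pos|apply HaM]. }
assert (0 <= l2norm x) by apply l2norm_nonneg.
assert (e' * (2 * (l2norm x + 1)) = eps) by (unfold e'; field; lra).
nra. Qed.

Definition Dal (lam : R) : op := fun x => Pw lam (sh (Pw (1 - lam) x)).

Lemma aluthge_exists lam : 0 < lam < 1 -> is_aluthge lam Top (Dal lam).
Proof. intro Hl. exists (diag aw), sh, (Pw lam), (Pw (1 - lam)).
split; [apply T_mod|split; [apply T_polar|split; [apply frac_Pw; lra|split; [apply frac_Pw; lra|]]]].
intros; reflexivity. Qed.

Definition Ed (m : nat) (f : nat -> R) (j : nat) : R :=
  sum_f_R0 (fun k => (-1) ^ k * Binomial.C m k * f (j + k)%nat) m.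

Lemma sum_opp (u : nat -> R) n : sum_f_R0 (fun i => - u i) n = - sum_f_R0 u n.
Proof. induction n; simpl; [ring|rewrite IHn; ring]. Qed.

Lemma C_out m k : (m < k)%nat -> Binomial.C m k = Binomial.C m k. Proof. auto. Qed.

Lemma Ed_step m f j : Ed (S m) f j = Ed m (fun n => f n - f (S n)) j.
Proof.
  unfold Ed.
  rewrite (sum_eq (fun k => (-1) ^ k * Binomial.C m k * (fun n => f n - f (S n)) (j + k)%nat)
     (fun k => (-1) ^ k * Binomial.C m k * f (j + k)%nat - (-1) ^ k * Binomial.C m k * f (S (j + k))))
    by (intros; ring).
  rewrite minus_sum.
  rewrite decomp_sum by lia. simpl pred.
  rewrite C_n_0. replace (j + 0)%nat with j by lia.
  destruct m as [|m].
  - simpl. rewrite C_n_n, C_n_0. replace (j + 1)%nat with (S (j + 0)) by lia.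
    replace (j+0)%nat with j by lia. ring.
  - rewrite (sum_eq (fun i => (-1) ^ S i * Binomial.C (S (S m)) (S i) * f (j + S i)%nat)
       (fun i => (-1) ^ S i * (if le_dec i m then Binomial.C (S m) (S i) else 0) * f (j + S i)%nat
               + (-1) ^ S i * Binomial.C (S m) i * f (j + S i)%nat)).
    2:{ intros i Hi. destruct (le_dec i m).
        - rewrite <- pascal by lia. ring.
        - assert (i = S m) by lia. subst. rewrite !C_n_n. ring. }
    rewrite plus_sum.
    rewrite tech5. destruct (le_dec (S m) m); [lia|].
    assert (E1 : sum_f_R0 (fun k => (-1) ^ k * Binomial.C (S m) k * f (j + k)%nat) (S m) =
            f j + sum_f_R0 (fun i => (-1) ^ S i * (if le_dec i m then Binomial.C (S m) (S i) else 0) * f (j + S i)%nat) m).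
    { rewrite decomp_sum by lia. simpl pred. rewrite C_n_0. replace (j + 0)%nat with j by lia.
      f_equal; [ring|]. apply sum_eq. intros i Hi. destruct (le_dec i m); [auto|lia]. }
    assert (E2 : sum_f_R0 (fun k => (-1) ^ k * Binomial.C (S m) k * f (S (j + k))) (S m) =
            - sum_f_R0 (fun i => (-1) ^ S i * Binomial.C (S m) i * f (j + S i)%nat) (S m)).
    { rewrite <- sum_opp. apply sum_eq. intros i Hi.
      replace (j + S i)%nat with (S (j + i)) by lia. simpl. ring. }
    rewrite E1, E2, tech5. ring.
Qed.

Lemma Ed_zero_lim k : forall h, (forall j, Ed k h j = 0) -> is_lim_seq h 0 -> forall n, h n = 0.
Proof.
  induction k as [|k IH]; intros h Hh Hl n.
  - specialize (Hh n). unfold Ed in Hh. simpl in Hh. rewrite C_n_0 in Hh.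
    replace (n + 0)%nat with n in Hh by lia. lra.
  - assert (Hd : forall n, h n - h (S n) = 0).
    { apply IH.
      - intro j; rewrite <- Ed_step; auto.
      - replace 0 with (0 - 0) by ring. apply is_lim_seq_minus'; auto.
        apply (is_lim_seq_incr_1 h 0); auto. }
    assert (Hc : forall n, h n = h 0%nat).
    { induction n0; auto. specialize (Hd n0). lra. }
    assert (Hk : is_lim_seq (fun _ => h 0%nat) 0).
    { apply is_lim_seq_ext with h; auto. }
    apply is_lim_seq_unique in Hk. rewrite Lim_seq_const in Hk. inversion Hk as [Hk0].
    rewrite Hc; auto.
Qed.

Lemma ln_le_sub1 z : 0 < z -> ln z <= z - 1.
Proof. intro Hz. assert (H := exp_ineq1_le (ln z)). rewrite exp_ln in H; lra. Qed.
Lemma ln_lt_sub1 z : 0 < z -> z <> 1 -> ln z < z - 1.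
Proof. intros Hz H1. assert (H0 : ln z <> 0).
{ intro E. apply H1. rewrite <- (exp_ln z) by auto. rewrite E, exp_0; auto. }
assert (H := exp_ineq1 (ln z) H0). rewrite exp_ln in H; lra. Qed.

Definition Gm (l x y : R) := Rpower x (1 - l) * Rpower y l.

Lemma amgm l x y : 0 < l < 1 -> 0 < x -> 0 < y -> Gm l x y <= (1 - l) * x + l * y /\
  (x <> y -> Gm l x y < (1 - l) * x + l * y).
Proof. intros Hl Hx Hy. set (A := (1 - l) * x + l * y).
assert (HA : 0 < A) by (unfold A; nra).
assert (EG : Gm l x y = exp ((1 - l) * ln x + l * ln y)).
{ unfold Gm, Rpower. rewrite <- exp_plus. f_equal. }
assert (Lx : ln x - ln A = ln (x / A)).
{ unfold Rdiv. rewrite ln_mult, ln_Rinv; auto. apply Rinv_0_lt_compat; auto. }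
assert (Ly : ln y - ln A = ln (y / A)).
{ unfold Rdiv. rewrite ln_mult, ln_Rinv; auto. apply Rinv_0_lt_compat; auto. }
assert (Hx' : 0 < x / A) by (apply Rdiv_lt_0_compat; auto).
assert (Hy' : 0 < y / A) by (apply Rdiv_lt_0_compat; auto).
assert (Hsum : (1 - l) * (x / A - 1) + l * (y / A - 1) = 0).
{ replace ((1 - l) * (x / A - 1) + l * (y / A - 1)) with (((1 - l) * x + l * y) / A - 1) by (field; lra).
  fold A. field; lra. }
assert (B1 := ln_le_sub1 _ Hx'). assert (B2 := ln_le_sub1 _ Hy').
split.
- rewrite EG. rewrite <- (exp_ln A) by auto. apply exp_le'.
  nra.
- intro Hxy. assert (x / A <> 1).
  { intro E. apply Hxy. assert (x = A) by (apply (Rmult_eq_reg_r (/ A)); [|apply Rinv_neq_0_compat; lra]; unfold Rdiv in E; rewrite E, Rinv_r; lra).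
    unfold A in H. assert (l * (y - x) = 0) by lra. apply Rmult_integral in H0. lra. }
  assert (B3 := ln_lt_sub1 _ Hx' H).
  rewrite EG. rewrite <- (exp_ln A) by auto. apply exp_increasing.
  nra.
Qed.

Lemma Gm_mult l x1 x2 y1 y2 : 0 < x1 -> 0 < x2 -> 0 < y1 -> 0 < y2 ->
  Gm l (x1 * x2) (y1 * y2) = Gm l x1 y1 * Gm l x2 y2.
Proof. intros. unfold Gm. rewrite <- !Rpower_mult_distr by auto. ring. Qed.

Lemma Gm_pos l x y : 0 < Gm l x y.
Proof. unfold Gm. apply Rmult_lt_0_compat; apply Rpower_gt0. Qed.

Lemma Gm_concave l u : 0 < l < 1 -> 0 < u ->
  Gm l u (u + 1) + Gm l (u + 2) (u + 3) < 2 * Gm l (u + 1) (u + 2).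
Proof. intros Hl Hu. set (A := u + 1). set (B := u + 2).
assert (HA : 0 < A) by (unfold A; lra). assert (HB : 0 < B) by (unfold B; lra).
replace (Gm l u A) with (Gm l A B * Gm l (u / A) ((u + 1) / B)).
2:{ rewrite <- Gm_mult; try apply Rdiv_lt_0_compat; try lra. f_equal; unfold A, B; field; lra. }
replace (Gm l B (u + 3)) with (Gm l A B * Gm l ((u + 2) / A) ((u + 3) / B)).
2:{ rewrite <- Gm_mult; try apply Rdiv_lt_0_compat; try lra. f_equal; unfold A, B; field; lra. }
assert (P1 : 0 < u / A) by (apply Rdiv_lt_0_compat; lra).
assert (P2 : 0 < (u + 1) / B) by (apply Rdiv_lt_0_compat; lra).
assert (P3 : 0 < (u + 2) / A) by (apply Rdiv_lt_0_compat; lra).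
assert (P4 : 0 < (u + 3) / B) by (apply Rdiv_lt_0_compat; lra).
destruct (amgm l (u / A) ((u + 1) / B) Hl P1 P2) as [_ H1].
destruct (amgm l ((u + 2) / A) ((u + 3) / B) Hl P3 P4) as [H2 _].
assert (Hne : u / A <> (u + 1) / B).
{ intro E. assert (E2 : u / A * (A * B) = (u + 1) / B * (A * B)) by (rewrite E; auto).
  replace (u / A * (A * B)) with (u * B) in E2 by (field; lra).
  replace ((u + 1) / B * (A * B)) with ((u + 1) * A) in E2 by (field; lra).
  unfold A, B in E2. nra. }
specialize (H1 Hne).
assert (HG := Gm_pos l A B).
assert (Hs : (1 - l) * (u / A) + l * ((u + 1) / B) + ((1 - l) * ((u + 2) / A) + l * ((u + 3) / B)) = 2).
{ unfold A, B. field. lra. }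
apply (Rmult_lt_compat_l (Gm l A B)) in H1; auto.
apply (Rmult_le_compat_l (Gm l A B)) in H2; [|lra].
assert (Gm l A B * ((1 - l) * (u / A) + l * ((u + 1) / B)) + Gm l A B * ((1 - l) * ((u + 2) / A) + l * ((u + 3) / B)) = 2 * Gm l A B).
{ rewrite <- Rmult_plus_distr_l, Hs. ring. }
lra.
Qed.

Definition gw (l : R) (n : nat) : R := Gm l (INR n + 1) (INR n + 2).

Lemma gw_pos l n : 0 < gw l n.
Proof. apply Gm_pos. Qed.

Lemma gw_incr l n : 0 < l < 1 -> gw l n <= gw l (S n).
Proof. intro Hl. unfold gw, Gm. rewrite S_INR. assert (0 <= INR n) by apply pos_INR.
apply Rmult_le_compat; try (left; apply Rpower_gt0); apply Rle_Rpower_l; lra. Qed.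

Lemma gw_concave l n : 0 < l < 1 -> gw l n - 2 * gw l (S n) + gw l (S (S n)) < 0.
Proof. intro Hl. unfold gw. rewrite !S_INR. assert (Hn : 0 <= INR n) by apply pos_INR.
assert (H := Gm_concave l (INR n + 1) Hl ltac:(lra)).
assert (q1 : Gm l (INR n + 1) (INR n + 2) = Gm l (INR n + 1) (INR n + 1 + 1)) by (f_equal; ring).
assert (q3 : Gm l (INR n + 1 + 1 + 1) (INR n + 1 + 1 + 2) = Gm l (INR n + 1 + 2) (INR n + 1 + 3)) by (f_equal; ring).
rewrite q1, q3. lra. Qed.

Lemma no_miso l m : 0 < l < 1 -> (2 <= m)%nat -> ~ (forall j, Ed m (gw l) j = 0).
Proof. intros Hl Hm Hall.
destruct m as [|[|m]]; try lia.
set (h := fun n => gw l n - 2 * gw l (S n) + gw l (S (S n))).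
assert (Hh : forall j, Ed m h j = 0).
{ intro j. rewrite <- (Hall j). rewrite !Ed_step. unfold Ed. apply sum_eq; intros; unfold h; ring. }
set (G := fun n => gw l (S n) - gw l n).
assert (HG : ex_finite_lim_seq G).
{ apply ex_finite_lim_seq_decr with 0.
  - intro n. unfold G. assert (H := gw_concave l n Hl). lra.
  - intro n. unfold G. assert (H := gw_incr l n Hl). lra. }
destruct HG as [L HL].
assert (Hlim : is_lim_seq h 0).
{ apply is_lim_seq_ext with (fun n => G (S n) - G n).
  - intro n; unfold G, h; ring.
  - replace 0 with (L - L) by ring. apply is_lim_seq_minus'; auto.
    apply (is_lim_seq_incr_1 G L); auto. }
assert (Z := Ed_zero_lim m h Hh Hlim 0%nat).
assert (Hc := gw_concave l 0 Hl). unfold h in Z. lra.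
Qed.

Lemma Top_ev j : Top (ev j) = scaleS (RtoC (aw j)) (ev (S j)).
Proof. apply functional_extensionality; intros [|n]; unfold Top, sh, diag, scaleS, ev.
- destruct (Nat.eq_dec 0 (S j)); [lia|ring].
- destruct (Nat.eq_dec n j), (Nat.eq_dec (S n) (S j)); subst; try lia; auto; ring. Qed.

Lemma adj_form Ts : is_adjoint Top Ts -> forall y, in_l2 y -> forall n,
  Ts y n = (RtoC (aw n) * y (S n))%C.
Proof. intros [_ H] y Hy n.
specialize (H (ev n) y (l2_ev n) Hy). rewrite Top_ev, inner_ev_l in H.
rewrite ev_scale1, inner_ev_l in H.
destruct (Ts y n) as [p q], (y (S n)) as [r s].
unfold Cmult, Cconj, RtoC in *; simpl in *. injection H as E1 E2.
f_equal; nra. Qed.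

Lemma A_form Ts : is_adjoint Top Ts -> forall y, in_l2 y ->
  Ts (Top y) = (fun n => RtoC (aw n ^ 2) * y n)%C.
Proof. intros H y Hy. apply functional_extensionality; intro n.
rewrite (adj_form Ts H (Top y) (T_l2 y Hy) n). unfold Top, sh, diag.
replace (aw n ^ 2) with (aw n * aw n) by ring. rewrite RtoC_mult. ring. Qed.

Lemma aw_sq_inj n m : aw n ^ 2 = aw m ^ 2 -> n = m.
Proof. rewrite !aw_sq'. intro E. assert (0 <= INR n) by apply pos_INR. assert (0 <= INR m) by apply pos_INR.
assert (E2 : (INR n + 2) / (INR n + 1) * ((INR n + 1) * (INR m + 1)) = (INR m + 2) / (INR m + 1) * ((INR n + 1) * (INR m + 1))) by (rewrite E; auto).
replace ((INR n + 2) / (INR n + 1) * ((INR n + 1) * (INR m + 1))) with ((INR n + 2) * (INR m + 1)) in E2 by (field; lra).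
replace ((INR m + 2) / (INR m + 1) * ((INR n + 1) * (INR m + 1))) with ((INR m + 2) * (INR n + 1)) in E2 by (field; lra).
apply INR_eq. lra. Qed.

Lemma S_ev S j : is_modulus Top S -> S (ev j) = scaleS (RtoC (aw j)) (ev j).
Proof. intros [HSb [HSp [Ts [HTs HSS]]]]. destruct HSb as [HSl [HSi _]].
assert (HA : forall y, in_l2 y -> S (S y) = (fun n => RtoC (aw n ^ 2) * y n)%C).
{ intros y Hy. rewrite HSS by auto. apply A_form; auto. }
set (w := S (ev j)). assert (Hw : in_l2 w) by (apply HSi, l2_ev).
assert (E1 : S w = scaleS (RtoC (aw j ^ 2)) (ev j)).
{ unfold w. rewrite HA by apply l2_ev. apply functional_extensionality; intro n.
  unfold scaleS, ev. destruct (Nat.eq_dec n j); subst; auto; ring. }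
assert (E2 : S (S w) = scaleS (RtoC (aw j ^ 2)) w).
{ rewrite E1, lin_scale by (auto; apply l2_ev). reflexivity. }
rewrite HA in E2 by auto.
assert (Hz : forall n, n <> j -> w n = 0%C).
{ intros n Hn. assert (En := f_equal (fun f => f n) E2). cbv beta in En. unfold scaleS in En.
  apply RtoC_mult_cancel with (aw n ^ 2 - aw j ^ 2).
  - intro E. apply Hn. apply aw_sq_inj. lra.
  - unfold Rminus. rewrite RtoC_plus, RtoC_opp. rewrite Cmult_plus_distr_r, En. ring. }
assert (Hp := HSp (ev j) (l2_ev j)). fold w in Hp. rewrite inner_ev_r in Hp.
set (s0 := w j) in *.
assert (Ew : w = scaleS s0 (ev j)).
{ apply functional_extensionality; intro n. unfold scaleS, ev.
  destruct (Nat.eq_dec n j); subst. unfold s0; ring. rewrite Hz by auto. ring. }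
assert (E3 : S w = scaleS (s0 * s0)%C (ev j)).
{ transitivity (S (scaleS s0 (ev j))); [f_equal; exact Ew|].
  rewrite lin_scale by (auto; apply l2_ev). fold w.
  transitivity (scaleS s0 (scaleS s0 (ev j))); [f_equal; exact Ew|].
  apply functional_extensionality; intro n; unfold scaleS; ring. }
rewrite E1 in E3. assert (Ej := f_equal (fun f => f j) E3). cbv beta in Ej.
unfold scaleS, ev in Ej. destruct (Nat.eq_dec j j); [|lia].
rewrite Ew. f_equal. clearbody s0. clearbody w.
destruct s0 as [r s]. unfold Im, Re in Hp; simpl in Hp. destruct Hp as [Hs Hr]. subst s.
unfold Cmult, RtoC in Ej; simpl in Ej. injection Ej as Ej1 Ej2.
assert (Ha := aw_pos j). unfold RtoC. f_equal. nra. Qed.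

Lemma op_poly_ev S cs j s : (forall c, S (scaleS c (ev j)) = scaleS (c * RtoC s)%C (ev j)) ->
  op_poly cs S (ev j) = scaleS (RtoC (peval cs s)) (ev j).
Proof. intro HS. induction cs as [|c cs IH]; simpl.
- apply functional_extensionality; intro n; unfold zeroS, scaleS; ring.
- rewrite IH, HS. apply functional_extensionality; intro n; unfold addS, scaleS.
  rewrite RtoC_plus, RtoC_mult. ring. Qed.

Lemma frac_ev S F p j s : 0 < p < 1 -> bounded_op S -> is_frac_pow S p F -> 0 < s ->
  (forall c, S (scaleS c (ev j)) = scaleS (c * RtoC s)%C (ev j)) ->
  F (ev j) = scaleS (RtoC (rpow s p)) (ev j).
Proof. intros Hp [_ [_ [M0 HM0]]] [HFb HF] Hs HSj.
set (M := Rabs M0 + 1). assert (HM : 0 < M) by (unfold M; assert (0 <= Rabs M0) by apply Rabs_pos; lra).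
assert (HMb : forall x, in_l2 x -> l2norm (S x) <= M * l2norm x).
{ intros x Hx. eapply Rle_trans; [apply HM0; auto|]. apply Rmult_le_compat_r; [apply l2norm_nonneg|].
  unfold M; assert (H := RRle_abs M0); lra. }
assert (HsM : s <= M).
{ specialize (HMb (ev j) (l2_ev j)). rewrite l2norm_ev, ev_scale1, HSj, l2norm_scale_ev in HMb.
  rewrite Cmult_1_l, Cmod_R, Rabs_pos_eq in HMb; lra. }
destruct (rpow_approx p M) as [ps Hps]; [lra|auto|].
assert (Hlim := HF M (Rlt_le _ _ HM) HMb ps Hps (ev j) (l2_ev j)).
destruct HFb as [_ [HFi _]]. assert (HFe : in_l2 (F (ev j))) by (apply HFi, l2_ev).
apply functional_extensionality; intro i.
assert (Hc : forall eps, 0 < eps -> Cmod ((scaleS (RtoC (rpow s p)) (ev j)) i - F (ev j) i) <= eps).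
{ intros eps Heps.
  destruct (Hps (eps / 2)) as [N1 HN1]; [lra|].
  apply is_lim_seq_spec in Hlim. destruct (Hlim (mkposreal (eps / 2) ltac:(lra))) as [N2 HN2].
  set (n := max N1 N2).
  specialize (HN1 n ltac:(lia) s ltac:(lra)). specialize (HN2 n ltac:(lia)). simpl in HN2.
  rewrite Rminus_0_r, Rabs_pos_eq in HN2 by apply l2norm_nonneg.
  rewrite op_poly_ev with (s := s) in HN2 by auto.
  assert (Hco := coord_le (subS (scaleS (RtoC (peval (ps n) s)) (ev j)) (F (ev j))) i
     (l2_sub _ _ (l2_scale_ev (RtoC (peval (ps n) s)) j) HFe)).
  change (Cmod (scaleS (RtoC (peval (ps n) s)) (ev j) i - F (ev j) i) <= l2norm (subS (scaleS (RtoC (peval (ps n) s)) (ev j)) (F (ev j)))) in Hco.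
  replace ((scaleS (RtoC (rpow s p)) (ev j)) i - F (ev j) i)%C with
    ((RtoC (rpow s p - peval (ps n) s) * ev j i) + (scaleS (RtoC (peval (ps n) s)) (ev j) i - F (ev j) i))%C.
  2:{ unfold scaleS. unfold Rminus. rewrite RtoC_plus, RtoC_opp. ring. }
  eapply Rle_trans; [apply Cmod_triangle|].
  rewrite Cmod_mult, Cmod_R.
  assert (Cmod (ev j i) <= 1).
  { unfold ev. destruct (Nat.eq_dec i j); [rewrite Cmod_1|rewrite Cmod_0]; lra. }
  assert (Rabs (rpow s p - peval (ps n) s) <= eps / 2).
  { rewrite Rabs_minus_sym; auto. }
  assert (0 <= Rabs (rpow s p - peval (ps n) s)) by apply Rabs_pos.
  assert (0 <= Cmod (ev j i)) by apply Cmod_ge_0.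
  nra. }
assert (Cmod ((scaleS (RtoC (rpow s p)) (ev j)) i - F (ev j) i) = 0).
{ apply Rle_antisym; [|apply Cmod_ge_0].
  apply Rnot_lt_le; intro Hlt. specialize (Hc _ (Rmult_lt_0_compat (/2) _ ltac:(lra) Hlt)). lra. }
apply Cmod_eq_0 in H. symmetry. apply (Cminus_eq_0 _ _) || idtac.
replace (F (ev j) i) with (scaleS (RtoC (rpow s p)) (ev j) i - (scaleS (RtoC (rpow s p)) (ev j) i - F (ev j) i))%C by ring.
rewrite H. ring. Qed.

Lemma S_scale_ev Sm j c : is_modulus Top Sm ->
  Sm (scaleS c (ev j)) = scaleS (c * RtoC (aw j))%C (ev j).
Proof. intro H. assert (HS := H). destruct H as [[HSl _] _].
rewrite lin_scale by (auto; apply l2_ev). rewrite (S_ev Sm j HS).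
apply functional_extensionality; intro n; unfold scaleS; ring. Qed.

Lemma V_ev Sm V j : is_modulus Top Sm -> is_polar_isometry Top Sm V -> V (ev j) = ev (S j).
Proof. intros HS [[[HVl _] _] [_ HT]].
assert (E := HT (ev j) (l2_ev j)). rewrite Top_ev, (S_ev Sm j HS), lin_scale in E by (auto; apply l2_ev).
apply functional_extensionality; intro n.
assert (En := f_equal (fun f => f n) E). cbv beta in En. unfold scaleS in En.
assert (Hz : (RtoC (aw j) * (V (ev j) n - ev (S j) n))%C = 0%C).
{ unfold Cminus. rewrite Cmult_plus_distr_l, <- En. ring. }
apply RtoC_mult_cancel in Hz; [|apply Rgt_not_eq, aw_pos].
replace (V (ev j) n) with ((V (ev j) n - ev (S j) n) + ev (S j) n)%C by ring.
rewrite Hz; ring. Qed.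

Definition bw (l : R) (n : nat) : R := rpow (aw n) (1 - l) * rpow (aw (S n)) l.

Lemma D_ev l D j : 0 < l < 1 -> is_aluthge l Top D -> D (ev j) = scaleS (RtoC (bw l j)) (ev (S j)).
Proof. intros Hl [Sm [V [P [Q [HS [HV [HP [HQ HD]]]]]]]].
assert (HSb : bounded_op Sm) by apply HS.
assert (HQe : Q (ev j) = scaleS (RtoC (rpow (aw j) (1 - l))) (ev j)).
{ apply (frac_ev Sm Q (1 - l) j (aw j)); auto; [lra|apply aw_pos|]. intro; apply S_scale_ev; auto. }
assert (HPe : P (ev (S j)) = scaleS (RtoC (rpow (aw (S j)) l)) (ev (S j))).
{ apply (frac_ev Sm P l (S j) (aw (S j))); auto; [apply aw_pos|]. intro; apply S_scale_ev; auto. }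
assert (HVl : op_linear V) by (destruct HV as [[[H _] _] _]; exact H).
assert (HPl : op_linear P) by (destruct HP as [[H _] _]; exact H).
rewrite HD by apply l2_ev. rewrite HQe, lin_scale by (auto; apply l2_ev).
rewrite (V_ev Sm V j HS HV), lin_scale by (auto; apply l2_ev). rewrite HPe.
apply functional_extensionality; intro n; unfold scaleS, bw. rewrite RtoC_mult. ring. Qed.

Lemma Rp_sq x p : 0 < x -> Rpower x p ^ 2 = Rpower (x ^ 2) p.
Proof. intro Hx. simpl. rewrite !Rmult_1_r. apply Rpower_mult_distr; auto. Qed.

Lemma Rp_div a b p : 0 < a -> 0 < b -> Rpower (a / b) p * Rpower b p = Rpower a p.
Proof. intros. rewrite Rpower_mult_distr; [|apply Rdiv_lt_0_compat; auto|auto].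
f_equal; field; lra. Qed.

Lemma gw_step l n : gw l (S n) = gw l n * bw l n ^ 2.
Proof. unfold gw, bw, Gm. rewrite !rpow_pos by apply aw_pos.
rewrite Rpow_mult_distr, !Rp_sq by apply aw_pos. rewrite !aw_sq'.
rewrite !S_INR. assert (0 <= INR n) by apply pos_INR.
replace (INR n + 1 + 1) with (INR n + 2) by ring.
replace (INR n + 1 + 2) with (INR n + 3) by ring.
rewrite <- (Rp_div (INR n + 2) (INR n + 1) (1 - l)) by lra.
rewrite <- (Rp_div (INR n + 3) (INR n + 2) l) by lra.
ring. Qed.

Lemma iter_ev l D j : 0 < l < 1 -> is_aluthge l Top D -> op_linear D -> forall k,
  exists c, Nat.iter k D (ev j) = scaleS (RtoC c) (ev (j + k)) /\ c ^ 2 * gw l j = gw l (j + k).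
Proof. intros Hl HD HDl k. induction k as [|k [c [Hc Hg]]].
- exists 1. simpl. rewrite Nat.add_0_r. split; [apply ev_scale1|ring].
- exists (c * bw l (j + k)). simpl Nat.iter. rewrite Hc, lin_scale by (auto; apply l2_ev).
  rewrite (D_ev l D (j + k)) by auto. split.
  + replace (j + S k)%nat with (S (j + k)) by lia.
    apply functional_extensionality; intro n; unfold scaleS. rewrite RtoC_mult. ring.
  + replace (j + S k)%nat with (S (j + k)) by lia. rewrite gw_step, <- Hg. ring.
Qed.

Theorem mainTheorem9 :
  exists T : op, bounded_op T /\ m_isometry 2 T /\
    forall lam : R, 0 < lam < 1 ->
      (exists D, is_aluthge lam T D) /\
      forall (m : nat) (D : op), (2 <= m)%nat -> is_aluthge lam T D -> ~ m_isometry m D.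
Proof.
  exists Top. split; [apply bounded_T|]. split; [apply T_2iso|].
  intros lam Hl. split; [exists (Dal lam); apply aluthge_exists; auto|].
  intros m D Hm HD [[HDl _] Hiso].
  apply (no_miso lam m Hl Hm). intro j.
  assert (Hs := Hiso (ev j) (l2_ev j)).
  unfold Ed.
  rewrite (sum_eq _ (fun k => ((-1) ^ k * Binomial.C m k * l2norm (Nat.iter k D (ev j)) ^ 2) * gw lam j)).
  - rewrite <- scal_sum, Hs. ring.
  - intros k Hk. destruct (iter_ev lam D j Hl HD HDl k) as [c [Hc Hg]].
    rewrite Hc, l2norm_scale_ev, Cmod_R, pow2_abs, <- Hg. ring.
Qed.
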